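(* Let $w=w_1\cdots w_n$ be a strict pin word and $(p_1,\dots,p_n)$, together with its origin $p_0$, the pin sequence encoded by $w$. For $i\ge2$ define $q(w_{i-1},w_i)=\phi^{-1}(w_{i-1}w_i)$ if $i\ge3$, and $q(w_1,w_2)=\phi^{-1}(BC)$ where $\phi(w_1w_2)=ABC$. Then for every $i\ge2$, $q(w_{i-1},w_i)$ is a numeral, and $p_i$ lies in quadrant $q(w_{i-1},w_i)$ with respect to $\{p_0,\dots,p_{i-2}\}$.
   Context: Pins are points of $\mathbb{Z}^2$. A pin $p$ separates a set $P$ from a set $Q$ horizontally (resp. vertically) if the horizontal (resp. vertical) line through $p$ has $P$ strictly on one side and $Q$ strictly on the other. A pin sequence is a sequence $(p_1,\dots,p_k)$ of pins, no two in a common row or column, such that for every $i\ge2$, $p_i$ lies outside the bounding box of $\{p_1,\dots,p_{i-1}\}$ and either $p_i$ separates $p_{i-1}$ from $\{p_1,\dots,p_{i-2}\}$ or $p_i$ is independent from $\{p_1,\dots,p_{i-1}\}$ (does not separate it into two nonempty sets). Pin words: given a pin sequence $(p_1,\dots,p_n)$ and an origin $p_0$ such that $(p_0,\dots,p_n)$ is a pin sequence, each $p_i$ ($i\ge1$) is encoded by $U$ (resp. $D,L,R$) if $p_i$ separates $p_{i-1}$ from $\{p_0,\dots,p_{i-2}\}$ and lies above (resp. below, left of, right of) the bounding box of $\{p_0,\dots,p_{i-1}\}$, and by $1$ (resp. $2,3,4$) if $p_i$ is independent from $\{p_0,\dots,p_{i-1}\}$ and lies in the up-right (resp. up-left, bottom-left,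 bottom-right) corner region of that bounding box. Letters $1,2,3,4$ are numerals, $U,D,L,R$ directions. A strict pin word is a pin word of length $\ge2$ whose first letter is a numeral and all others directions; it determines its pin sequence $(p_0,\dots,p_n)$ up to order isomorphism. A point $x$ lies in quadrant $1$ (resp. $2,3,4$) with respect to a finite set $S$ of points if its abscissa is larger (resp. smaller, smaller, larger) than all abscissas in $S$ and its ordinate is larger (resp. larger, smaller, smaller) than all ordinates in $S$. For a strict pin word $u=u'u''$ with $|u'|=2$, $\phi(u)=\varphi(u')u''$ with $\varphi$: $1R\mapsto RUR$, $2R\mapsto LUR$, $3R\mapsto LDR$, $4R\mapsto RDR$, $1L\mapsto RUL$, $2L\mapsto LUL$, $3L\mapsto LDL$, $4L\mapsto RDL$, $1U\mapsto URU$, $2U\mapsto ULU$, $3U\mapsto DLU$, $4U\mapsto DRU$, $1D\mapsto URD$, $2D\mapsto ULD$, $3D\mapsto DLD$, $4D\mapsto DRD$. On two-letter words of directions, $\phi^{-1}$ is defined by $\phi^{-1}(UR)=\phi^{-1}(RU)=1$, $\phi^{-1}(UL)=\phi^{-1}(LU)=2$, $\phi^{-1}(DL)=\phi^{-1}(LD)=3$, $\phi^{-1}(RD)=\phi^{-1}(DR)=4$. *)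

(* Defs.v *)
From Stdlib Require Import ZArith List.
Import ListNotations.
Open Scope Z_scope.

Definition point : Type := (Z * Z)%type.
Definition xc (p : point) : Z := fst p.
Definition yc (p : point) : Z := snd p.

Inductive letter : Type := N1 | N2 | N3 | N4 | U | D | L | R.

Definition is_numeral (c : letter) : Prop :=
  match c with N1 | N2 | N3 | N4 => True | _ => False end.
Definition is_direction (c : letter) : Prop :=
  match c with U | D | L | R => True | _ => False end.

Definition sep_h (p : point) (P Q : point -> Prop) : Prop :=
  ((forall a, P a -> yc a < yc p) /\ (forall b, Q b -> yc p < yc b)) \/
  ((forall a, P a -> yc p < yc a) /\ (forall b, Q b -> yc b < yc p)).
Definition sep_v (p : point) (P Q : point -> Prop) : Prop :=
  ((forall a, P a -> xc a < xc p) /\ (forall b, Q b -> xc p < xc b)) \/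
  ((forall a, P a -> xc p < xc a) /\ (forall b, Q b -> xc b < xc p)).
Definition separates (p : point) (P Q : point -> Prop) : Prop :=
  sep_h p P Q \/ sep_v p P Q.

Definition sep_from (p x : point) (S : list point) : Prop :=
  separates p (fun a => a = x) (fun a => In a S).

Definition independent (p : point) (S : list point) : Prop :=
  ~ exists P Q : point -> Prop,
      (forall a, In a S <-> (P a \/ Q a)) /\
      (exists a, P a) /\ (exists b, Q b) /\ separates p P Q.

Definition in_bbox (p : point) (S : list point) : Prop :=
  exists a b c d, In a S /\ In b S /\ In c S /\ In d S /\
    xc a <= xc p <= xc b /\ yc c <= yc p <= yc d.

(* pin sequence (p_1,...,p_k), here as a list indexed from 0 *)
Definition pin_seq (s : list point) : Prop :=
  (forall i j, (i < length s)%nat -> (j < length s)%nat -> i <> j ->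
     xc (nth i s (0,0)) <> xc (nth j s (0,0)) /\
     yc (nth i s (0,0)) <> yc (nth j s (0,0))) /\
  (forall i, (1 <= i < length s)%nat ->
     ~ in_bbox (nth i s (0,0)) (firstn i s) /\
     (sep_from (nth i s (0,0)) (nth (i - 1) s (0,0)) (firstn (i - 1) s)
      \/ independent (nth i s (0,0)) (firstn i s))).

Definition above (p : point) (S : list point) : Prop := forall a, In a S -> yc a < yc p.
Definition below (p : point) (S : list point) : Prop := forall a, In a S -> yc p < yc a.
Definition leftof (p : point) (S : list point) : Prop := forall a, In a S -> xc p < xc a.
Definition rightof (p : point) (S : list point) : Prop := forall a, In a S -> xc a < xc p.

Definition quadrant (q : letter) (x : point) (S : list point) : Prop :=
  match q with
  | N1 => forall a, In a S -> xc a < xc x /\ yc a < yc x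
  | N2 => forall a, In a S -> xc x < xc a /\ yc a < yc x
  | N3 => forall a, In a S -> xc x < xc a /\ yc x < yc a
  | N4 => forall a, In a S -> xc a < xc x /\ yc x < yc a
  | _ => False
  end.

(* letter c encodes point p given the previous points pre = (p_0,...,p_{i-1}) *)
Definition encodes (c : letter) (pre : list point) (p : point) : Prop :=
  let prev := last pre (0,0) in
  let older := removelast pre in
  match c with
  | U => sep_from p prev older /\ above p pre
  | D => sep_from p prev older /\ below p pre
  | L => sep_from p prev older /\ leftof p pre
  | R => sep_from p prev older /\ rightof p pre
  | N1 | N2 | N3 | N4 => independent p pre /\ quadrant c p pre
  end.

Definition encoded_by (w : list letter) (p0 : point) (ps : list point) : Prop :=
  length ps = length w /\ pin_seq (p0 :: ps) /\
  forall i, (1 <= i <= length w)%nat ->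
    encodes (nth (i - 1) w N1) (firstn i (p0 :: ps)) (nth i (p0 :: ps) p0).

Definition strict_pin_word (w : list letter) : Prop :=
  (2 <= length w)%nat /\
  match w with
  | c :: r => is_numeral c /\ Forall is_direction r
  | [] => False
  end.

Definition phi2 (a b : letter) : option (letter * letter * letter) :=
  match a, b with
  | N1, R => Some (R, U, R) | N2, R => Some (L, U, R)
  | N3, R => Some (L, D, R) | N4, R => Some (R, D, R)
  | N1, L => Some (R, U, L) | N2, L => Some (L, U, L)
  | N3, L => Some (L, D, L) | N4, L => Some (R, D, L)
  | N1, U => Some (U, R, U) | N2, U => Some (U, L, U)
  | N3, U => Some (D, L, U) | N4, U => Some (D, R, U)
  | N1, D => Some (U, R, D) | N2, D => Some (U, L, D)
  | N3, D => Some (D, L, D) | N4, D => Some (D, R, D)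
  | _, _ => None
  end.

Definition phiinv (a b : letter) : option letter :=
  match a, b with
  | U, R | R, U => Some N1
  | U, L | L, U => Some N2
  | D, L | L, D => Some N3
  | R, D | D, R => Some N4
  | _, _ => None
  end.

(* q(w_{i-1}, w_i) for 1-indexed i >= 2 *)
Definition qw (w : list letter) (i : nat) : option letter :=
  if Nat.eqb i 2 then
    match phi2 (nth 0 w N1) (nth 1 w N1) with
    | Some (_, B, C) => phiinv B C
    | None => None
    end
  else phiinv (nth (i - 2) w N1) (nth (i - 1) w N1).

(* Main.v *)
Require Import Defs.
From Stdlib Require Import ZArith List Lia.
Import ListNotations.
Open Scope Z_scope.

Ltac mem := first [ reflexivity | assumption | simpl; tauto | apply in_or_app; first [ left; mem | right; mem ] ].

Definition done {A : Type} (x : A) : Prop := True.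

Ltac inst p :=
  repeat match goal with
  | H : forall a : point, @?P a |- _ =>
      lazymatch goal with
      | Hm : done (H, p) |- _ => fail
      | _ =>
        (try (let Hn := fresh "I" in pose proof (H p ltac:(mem)) as Hn));
        assert (done (H, p)) by exact I
      end
  end.

Ltac clean :=
  repeat match goal with
  | H : done _ |- _ => clear H
  | H : forall a : point, @?P a |- _ => clear H
  end.

Ltac splitall :=
  repeat match goal with
  | H : _ /\ _ |- _ => destruct H
  | H : _ \/ _ |- _ => destruct H
  end.

Lemma key3 (a b : letter) (O : list point) (Z X Y o : point) :
  is_direction a -> is_direction b -> In o O ->
  encodes a (O ++ [Z]) X -> encodes b ((O ++ [Z]) ++ [X]) Y ->
  exists c, phiinv a b = Some c /\ is_numeral c /\ quadrant c Y (O ++ [Z]).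
Proof.
  intros Ha Hb Ho.
  destruct a; try contradiction; destruct b; try contradiction;
  unfold encodes; rewrite !last_last, !removelast_last;
  unfold sep_from, separates, sep_h, sep_v, above, below, leftof, rightof;
  intros H1 H2; simpl phiinv;
  first
  [ exfalso; splitall; inst o; inst Z; inst X; clean; lia
  | eexists; split; [reflexivity | split; [exact I | simpl; intros s Hs;
      splitall; inst o; inst Z; inst X; inst s; clean; split; lia]] ].
Qed.

Lemma key2 (a b : letter) (p0 X Y : point) :
  is_numeral a -> is_direction b ->
  encodes a [p0] X -> encodes b [p0; X] Y ->
  exists c, match phi2 a b with Some (_, B, C) => phiinv B C | None => None end = Some c
    /\ is_numeral c /\ quadrant c Y [p0].
Proof.
  intros Ha Hb.
  destruct a; try contradiction; destruct b; try contradiction;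
  unfold encodes; simpl last; simpl removelast;
  unfold sep_from, separates, sep_h, sep_v, above, below, leftof, rightof, quadrant;
  intros H1 H2; destruct H1 as [_ H1]; simpl phi2; simpl phiinv;
  solve [eexists; split; [reflexivity | split; [exact I | simpl; intros s Hs;
      splitall; inst p0; inst X; inst s; clean; split; lia]]].
Qed.

Lemma firstn_S_nth {A : Type} (l : list A) (k : nat) (d : A) :
  (k < length l)%nat -> firstn (S k) l = firstn k l ++ [nth k l d].
Proof.
  revert k; induction l as [|x l IH]; intros k Hk; simpl in Hk; [lia|].
  destruct k as [|k]; [reflexivity|].
  simpl. f_equal. apply IH. lia.
Qed.

Theorem lemma6 (w : list letter) (p0 : point) (ps : list point) :
  strict_pin_word w ->
  encoded_by w p0 ps ->
  forall i : nat, (2 <= i <= length w)%nat ->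
    exists c : letter,
      qw w i = Some c /\ is_numeral c /\
      quadrant c (nth i (p0 :: ps) p0) (firstn (i - 1) (p0 :: ps)).
Proof.
  intros [Hlen Hw] [Hl [_ Henc]] i Hi.
  destruct w as [|c1 [|c2 r]]; simpl in Hlen; try lia.
  destruct Hw as [Hc1 Hr].
  destruct (Nat.eq_dec i 2) as [->|Hne].
  - destruct ps as [|X [|Y ps']]; simpl in Hl; try lia.
    pose proof (Henc 1%nat ltac:(simpl; lia)) as E1.
    pose proof (Henc 2%nat ltac:(simpl; lia)) as E2.
    simpl in E1, E2. unfold qw. simpl.
    apply (key2 c1 c2 p0 X Y); auto.
    inversion Hr; assumption.
  - assert (Hq : qw (c1 :: c2 :: r) i =
                 phiinv (nth (i - 2) (c1 :: c2 :: r) N1) (nth (i - 1) (c1 :: c2 :: r) N1)).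
    { unfold qw. destruct (Nat.eqb_spec i 2); [lia|reflexivity]. }
    rewrite Hq.
    set (w := c1 :: c2 :: r) in *.
    set (Lp := p0 :: ps).
    assert (HLp : length Lp = S (length w)) by (unfold Lp; change (length (p0::ps)) with (S (length ps)); lia).
    assert (Hdir : forall j, (1 <= j < length w)%nat -> is_direction (nth j w N1)).
    { intros j Hj. destruct j as [|j]; [lia|].
      unfold w. simpl. rewrite Forall_nth in Hr. apply Hr. simpl in Hj |- *. lia. }
    assert (F1 : firstn (i - 1) Lp = firstn (i - 2) Lp ++ [nth (i - 2) Lp p0]).
    { replace (i - 1)%nat with (S (i - 2)) by lia. apply firstn_S_nth. lia. }
    assert (F2 : firstn i Lp = firstn (i - 1) Lp ++ [nth (i - 1) Lp p0]).
    { replace i with (S (i - 1)) at 1 by lia. apply firstn_S_nth. lia. }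
    assert (Ho : In p0 (firstn (i - 2) Lp)).
    { replace (i - 2)%nat with (S (i - 3)) by lia. unfold Lp. simpl. left; reflexivity. }
    pose proof (Henc (i - 1)%nat ltac:(lia)) as E1.
    pose proof (Henc i ltac:(lia)) as E2.
    fold Lp in E1, E2.
    replace (i - 1 - 1)%nat with (i - 2)%nat in E1 by lia.
    rewrite F1 in E1. rewrite F2, F1 in E2. rewrite F1.
    eapply key3; eauto; apply Hdir; lia.
Qed.
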